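(* Let $M$ and $N$ be $\lambda$-terms. Assume there exists a reduct $N'$ of $N$ (i.e. $N \twoheadrightarrow_\beta N'$) such that for no reduct $M'$ of $M$ it holds that $M' \le_c N'$. Then $M \neq_\beta N$.
   Context: Untyped $\lambda$-calculus with $\beta$-reduction. A head reduction step is a step $\lambda x_1\ldots x_n.(\lambda y.P)Q Q_1\ldots Q_m \to \lambda x_1\ldots x_n.P[y:=Q] Q_1\ldots Q_m$; a head normal form (hnf) is $\lambda x_1\ldots x_n.\,y M_1\ldots M_m$. The clocked Böhm tree $\mathrm{cBT}(t)$ is defined coinductively: if $t$ has no hnf, $\mathrm{cBT}(t)=\bot$ (unannotated); otherwise $t$ head-reduces in $k$ steps to an hnf $\lambda x_1\ldots x_n.\,y M_1\ldots M_m$, and $\mathrm{cBT}(t)$ is $\lambda x_1\ldots x_n.\,y\,\mathrm{cBT}(M_1)\ldots\mathrm{cBT}(M_m)$ with its root annotated by $k$. $\mathrm{BT}(t)$ is $\mathrm{cBT}(t)$ with annotations erased. For $\lambda$-terms $P,Q$, $P \le_c Q$ means: $\mathrm{BT}(P) = \mathrm{BT}(Q)$ and at every position of these trees either neither $\mathrm{cBT}(P)$ nor $\mathrm{cBT}(Q)$ is annotated, or both are, with annotations $k_1$ and $k_2$ respectively satisfying $k_1 \le k_2$. *)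

(* Defs.v *)
From Stdlib Require Import Arith List Relations ClassicalEpsilon.
Import ListNotations.

Inductive term : Type :=
| Var : nat -> term
| Lam : term -> term
| App : term -> term -> term.

Fixpoint lift (c : nat) (t : term) : term :=
  match t with
  | Var n => if n <? c then Var n else Var (S n)
  | Lam b => Lam (lift (S c) b)
  | App a b => App (lift c a) (lift c b)
  end.

(* subst k u t : t[k := u], removing binder k (indices > k decremented) *)
Fixpoint subst (k : nat) (u : term) (t : term) : term :=
  match t with
  | Var n => if n <? k then Var n else if n =? k then u else Var (pred n)
  | Lam b => Lam (subst (S k) (lift 0 u) b)
  | App a b => App (subst k u a) (subst k u b)
  end.

Inductive beta : term -> term -> Prop :=
| beta_redex : forall b u, beta (App (Lam b) u) (subst 0 u b)
| beta_lam : forall b b', beta b b' -> beta (Lam b) (Lam b')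
| beta_appl : forall a a' b, beta a a' -> beta (App a b) (App a' b)
| beta_appr : forall a b b', beta b b' -> beta (App a b) (App a b').

Definition red : term -> term -> Prop := clos_refl_trans term beta.
Definition conv : term -> term -> Prop := clos_refl_sym_trans term beta.

(* head reduction step:
   \x1..xn.(\y.P) Q Q1..Qm -> \x1..xn.P[y:=Q] Q1..Qm *)
Definition is_lam (t : term) : bool :=
  match t with Lam _ => true | _ => false end.

Inductive hstep : term -> term -> Prop :=
| hstep_redex : forall b u, hstep (App (Lam b) u) (subst 0 u b)
| hstep_lam : forall b b', hstep b b' -> hstep (Lam b) (Lam b')
| hstep_app : forall a a' b, is_lam a = false -> hstep a a' ->
    hstep (App a b) (App a' b).

Inductive hsteps : nat -> term -> term -> Prop :=
| hsteps_0 : forall t, hsteps 0 t t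
| hsteps_S : forall k t t' t'', hstep t t' -> hsteps k t' t'' ->
    hsteps (S k) t t''.

Fixpoint lams (n : nat) (t : term) : term :=
  match n with 0 => t | S n' => Lam (lams n' t) end.

Definition apps (h : term) (args : list term) : term := fold_left App args h.

(* head normal form \x1..xn. y M1..Mm, written lams n (apps (Var y) args) *)
Definition hnf_data_spec (t : term) (d : nat * nat * nat * list term) : Prop :=
  let '(k, n, y, args) := d in hsteps k t (lams n (apps (Var y) args)).

Definition hnf_data (t : term) : option (nat * nat * nat * list term) :=
  match excluded_middle_informative (exists d, hnf_data_spec t d) with
  | left H => Some (proj1_sig (constructive_indefinite_description _ H))
  | right _ => None
  end.

(* clocked Böhm trees: Bot, or a node with annotation k, n abstractions,
   head variable y (de Bruijn index), m children *)
CoInductive cbt : Type :=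
| Bot : cbt
| Node : nat -> nat -> nat -> nat -> (nat -> cbt) -> cbt.

CoFixpoint cBT (t : term) : cbt :=
  match hnf_data t with
  | None => Bot
  | Some (k, n, y, args) =>
      Node k n y (length args) (fun i => cBT (nth i args (Var 0)))
  end.

CoInductive cbt_le : cbt -> cbt -> Prop :=
| cbt_le_bot : cbt_le Bot Bot
| cbt_le_node : forall k1 k2 n y m f g,
    k1 <= k2 -> (forall i, i < m -> cbt_le (f i) (g i)) ->
    cbt_le (Node k1 n y m f) (Node k2 n y m g).

Definition le_c (P Q : term) : Prop := cbt_le (cBT P) (cBT Q).

(* Main.v *)
Require Import Defs.
From Stdlib Require Import Arith Lia List Relations ClassicalEpsilon.
Import ListNotations.

Lemma lift_lift : forall t c d, c <= d -> lift (S d) (lift c t) = lift c (lift d t).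
Proof.
  induction t; intros c d H; simpl.
  - destruct (Nat.ltb_spec n c); destruct (Nat.ltb_spec n d); simpl;
    repeat match goal with |- context [?a <? ?b] => destruct (Nat.ltb_spec a b) end;
    try reflexivity; lia.
  - f_equal. apply IHt. lia.
  - f_equal; auto.
Qed.

Ltac crunch :=
  repeat (cbn [lift subst pred]; match goal with
  | |- context [?a <? ?b] => destruct (Nat.ltb_spec a b)
  | |- context [?a =? ?b] => destruct (Nat.eqb_spec a b)
  end); try reflexivity; try (exfalso; lia).

Lemma subst_lift_cancel : forall t k u, subst k u (lift k t) = t.
Proof.
  induction t; intros k u; simpl.
  - crunch; f_equal; lia.
  - f_equal. apply IHt.
  - f_equal; auto.
Qed.

Lemma lift_subst_lo : forall t c k u, c <= k ->
  lift c (subst k u t) = subst (S k) (lift c u) (lift c t).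
Proof.
  induction t; intros c k u H; simpl.
  - crunch; try (f_equal; lia).
  - f_equal. rewrite IHt by lia. f_equal. apply lift_lift. lia.
  - f_equal; auto.
Qed.

Lemma lift_subst_hi : forall t c k u, k <= c ->
  lift c (subst k u t) = subst k (lift c u) (lift (S c) t).
Proof.
  induction t; intros c k u H; simpl.
  - crunch; try (f_equal; lia).
  - f_equal. rewrite IHt by lia. f_equal. apply lift_lift. lia.
  - f_equal; auto.
Qed.

Lemma subst_subst : forall t j k u v, j <= k ->
  subst k v (subst j u t) = subst j (subst k v u) (subst (S k) (lift j v) t).
Proof.
  induction t; intros j k u v H; simpl.
  - crunch; try (f_equal; lia).
    + subst. rewrite subst_lift_cancel. reflexivity.
  - f_equal. rewrite IHt by lia. f_equal.
    + symmetry. apply lift_subst_lo. lia.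
    + f_equal. apply lift_lift. lia.
  - f_equal; auto.
Qed.
Inductive par : term -> term -> Prop :=
| par_var : forall n, par (Var n) (Var n)
| par_lam : forall b b', par b b' -> par (Lam b) (Lam b')
| par_app : forall a a' c c', par a a' -> par c c' -> par (App a c) (App a' c')
| par_beta : forall b b' c c', par b b' -> par c c' ->
    par (App (Lam b) c) (subst 0 c' b').

Lemma par_refl : forall t, par t t.
Proof. induction t; constructor; auto. Qed.

Lemma beta_par : forall s t, beta s t -> par s t.
Proof. induction 1; constructor; auto using par_refl. Qed.

Lemma red_lam : forall b b', red b b' -> red (Lam b) (Lam b').
Proof. induction 1; [apply rt_step; constructor; auto|apply rt_refl|eapply rt_trans; eauto]. Qed.
Lemma red_appl : forall a a' c, red a a' -> red (App a c) (App a' c).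
Proof. induction 1; [apply rt_step; constructor; auto|apply rt_refl|eapply rt_trans; eauto]. Qed.
Lemma red_appr : forall a c c', red c c' -> red (App a c) (App a c').
Proof. induction 1; [apply rt_step; constructor; auto|apply rt_refl|eapply rt_trans; eauto]. Qed.

Lemma par_red : forall s t, par s t -> red s t.
Proof.
  induction 1.
  - apply rt_refl.
  - apply red_lam; auto.
  - eapply rt_trans; [apply red_appl; eauto | apply red_appr; eauto].
  - eapply rt_trans; [apply red_appl, red_lam; eauto|].
    eapply rt_trans; [apply red_appr; eauto|].
    apply rt_step. constructor.
Qed.

Lemma par_lift : forall t t', par t t' -> forall c, par (lift c t) (lift c t').
Proof.
  induction 1; intros; simpl.
  - apply par_refl.
  - constructor; auto.
  - constructor; auto.
  - rewrite lift_subst_hi by lia. constructor; auto.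
Qed.

Lemma par_subst : forall t t', par t t' -> forall k u u', par u u' ->
  par (subst k u t) (subst k u' t').
Proof.
  induction 1; intros k u u' Hu; simpl.
  - crunch; apply par_refl || auto.
  - constructor. apply IHpar. apply par_lift. auto.
  - constructor; auto.
  - rewrite subst_subst by lia. constructor; auto. apply IHpar1. apply par_lift; auto.
Qed.

Lemma par_lam_inv : forall b N, par (Lam b) N -> exists b', N = Lam b' /\ par b b'.
Proof. intros b N H; inversion H; subst; eauto. Qed.

Lemma par_diamond : forall M N1, par M N1 -> forall N2, par M N2 ->
  exists Z, par N1 Z /\ par N2 Z.
Proof.
  induction 1; intros N2 H2.
  - inversion H2; subst. exists (Var n); split; constructor.
  - inversion H2; subst. destruct (IHpar _ H1) as [Z [? ?]].
    exists (Lam Z); split; constructor; auto.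
  - inversion H2; subst.
    + match goal with H : par a _ |- _ => destruct (IHpar1 _ H) as [Z1 [? ?]] end.
      match goal with H : par c _ |- _ => destruct (IHpar2 _ H) as [Z2 [? ?]] end.
      exists (App Z1 Z2); split; constructor; auto.
    + rename b' into bb. rename c'0 into cc.
      destruct (par_lam_inv _ _ H) as [b1 [-> Hb1]].
      destruct (IHpar1 (Lam bb)) as [Z1 [HZ1 HZ2]]; [constructor; auto|].
      destruct (par_lam_inv _ _ HZ2) as [zb [-> Hzb2]].
      inversion HZ1; subst.
      match goal with H : par c cc |- _ => destruct (IHpar2 _ H) as [Z2 [? ?]] end.
      exists (subst 0 Z2 zb); split.
      * constructor; auto.
      * apply par_subst; auto.
  - inversion H2; subst.
    + match goal with H : par (Lam b) _ |- _ => destruct (par_lam_inv _ _ H) as [b1 [-> Hb1]] end.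
      destruct (IHpar1 _ Hb1) as [Z1 [? ?]].
      match goal with H : par c _ |- _ => destruct (IHpar2 _ H) as [Z2 [? ?]] end.
      exists (subst 0 Z2 Z1); split.
      * apply par_subst; auto.
      * constructor; auto.
    + match goal with H : par b _ |- _ => destruct (IHpar1 _ H) as [Z1 [? ?]] end.
      match goal with H : par c _ |- _ => destruct (IHpar2 _ H) as [Z2 [? ?]] end.
      exists (subst 0 Z2 Z1); split; apply par_subst; auto.
Qed.

Lemma strip : forall M N2, red M N2 -> forall N1, par M N1 ->
  exists Z, red N1 Z /\ par N2 Z.
Proof.
  induction 1; intros N1 H1.
  - destruct (par_diamond _ _ H1 _ (beta_par _ _ H)) as [Z [? ?]].
    exists Z; split; auto. apply par_red; auto.
  - exists N1; split; auto. apply rt_refl.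
  - destruct (IHclos_refl_trans1 _ H1) as [Z1 [? ?]].
    destruct (IHclos_refl_trans2 _ H3) as [Z2 [? ?]].
    exists Z2; split; auto. eapply rt_trans; eauto.
Qed.

Lemma confluence : forall M N1, red M N1 -> forall N2, red M N2 ->
  exists Z, red N1 Z /\ red N2 Z.
Proof.
  induction 1; intros N2 H2.
  - destruct (strip _ _ H2 _ (beta_par _ _ H)) as [Z [? ?]].
    exists Z; split; auto. apply par_red; auto.
  - exists N2; split; auto. apply rt_refl.
  - destruct (IHclos_refl_trans1 _ H2) as [Z1 [? ?]].
    destruct (IHclos_refl_trans2 _ H1) as [Z2 [? ?]].
    exists Z2; split; auto. eapply rt_trans; eauto.
Qed.

Lemma conv_join : forall M N, conv M N -> exists Z, red M Z /\ red N Z.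
Proof.
  induction 1.
  - exists y; split; [apply rt_step; auto|apply rt_refl].
  - exists x; split; apply rt_refl.
  - destruct IHclos_refl_sym_trans as [Z [? ?]]; eauto.
  - destruct IHclos_refl_sym_trans1 as [Z1 [? ?]].
    destruct IHclos_refl_sym_trans2 as [Z2 [? ?]].
    destruct (confluence _ _ H2 _ H3) as [W [? ?]].
    exists W; split; eapply rt_trans; eauto.
Qed.

Lemma red_conv : forall M N, red M N -> conv M N.
Proof.
  induction 1; [apply rst_step; auto|apply rst_refl|eapply rst_trans; eauto].
Qed.
Inductive whstep : term -> term -> Prop :=
| wh_redex : forall b u, whstep (App (Lam b) u) (subst 0 u b)
| wh_app : forall a a' b, whstep a a' -> whstep (App a b) (App a' b).

Definition whsteps := clos_refl_trans term whstep.

Inductive wpar : term -> term -> Prop :=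
| wpar_var : forall n, wpar (Var n) (Var n)
| wpar_lam : forall b b', par b b' -> wpar (Lam b) (Lam b')
| wpar_app : forall a a' c c', wpar a a' -> par c c' -> wpar (App a c) (App a' c').

Lemma wpar_par : forall s t, wpar s t -> par s t.
Proof. induction 1; constructor; auto. Qed.

Lemma whsteps_app : forall a a' c, whsteps a a' -> whsteps (App a c) (App a' c).
Proof. induction 1; [apply rt_step; constructor; auto|apply rt_refl|eapply rt_trans; eauto]. Qed.

Lemma whstep_subst : forall s s', whstep s s' -> forall k u,
  whstep (subst k u s) (subst k u s').
Proof.
  induction 1; intros k v; simpl.
  - rewrite subst_subst by lia. constructor.
  - constructor; auto.
Qed.

Lemma whsteps_subst : forall s s', whsteps s s' -> forall k u,
  whsteps (subst k u s) (subst k u s').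
Proof.
  induction 1; intros; [apply rt_step; apply whstep_subst; auto|apply rt_refl|].
  eapply rt_trans; [apply IHclos_refl_trans1|apply IHclos_refl_trans2].
Qed.

Lemma wpar_sub : forall L N1, wpar L N1 -> forall k M2 N2, par M2 N2 ->
  (exists M2', whsteps M2 M2' /\ wpar M2' N2) ->
  exists X, whsteps (subst k M2 L) X /\ wpar X (subst k N2 N1).
Proof.
  induction 1; intros k M2 N2 HP [M2' [HM HW]]; simpl.
  - crunch; try (eexists; split; [apply rt_refl|constructor]). eauto.
  - eexists; split; [apply rt_refl|]. constructor. apply par_subst; auto. apply par_lift; auto.
  - destruct (IHwpar k M2 N2 HP) as [X [? ?]]; eauto.
    exists (App X (subst k M2 c)); split.
    + apply whsteps_app; auto.
    + constructor; auto. apply par_subst; auto.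
Qed.

Lemma par_whsteps : forall M N, par M N -> exists M1, whsteps M M1 /\ wpar M1 N.
Proof.
  induction 1.
  - eexists; split; [apply rt_refl|constructor].
  - eexists; split; [apply rt_refl|constructor; auto].
  - destruct IHpar1 as [a1 [? ?]]. exists (App a1 c); split.
    + apply whsteps_app; auto.
    + constructor; auto.
  - destruct IHpar1 as [L [? ?]].
    destruct (wpar_sub _ _ H2 0 c c' H0 IHpar2) as [X [? ?]].
    exists X; split; auto.
    eapply rt_trans; [apply rt_step; constructor|].
    eapply rt_trans; [apply whsteps_subst; eauto|]. auto.
Qed.

Lemma wpar_whstep : forall N N', whstep N N' -> forall M, wpar M N ->
  exists M', whstep M M' /\ par M' N'.
Proof.
  induction 1; intros M HM.
  - inversion HM; subst.
    match goal with H : wpar _ (Lam _) |- _ => inversion H; subst end.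
    eexists; split; [constructor|]. apply par_subst; auto.
  - inversion HM; subst.
    match goal with H : wpar _ a |- _ => destruct (IHwhstep _ H) as [a1 [? ?]] end.
    exists (App a1 c); split; constructor; auto.
Qed.

Lemma par_whstep_fwd : forall M M1, whstep M M1 -> forall N, par M N ->
  exists N1, (N1 = N \/ whstep N N1) /\ par M1 N1.
Proof.
  induction 1; intros N HN.
  - inversion HN; subst.
    + destruct (par_lam_inv _ _ H1) as [b1 [-> ?]].
      eexists; split; [right; constructor|]. apply par_subst; auto.
    + eexists; split; [left; reflexivity|]. apply par_subst; auto.
  - inversion HN; subst.
    + destruct (IHwhstep _ H2) as [N1 [[E|?] ?]].
      * subst N1. exists (App a'0 c'); split; [left; auto|constructor; auto].
      * exists (App N1 c'); split; [right; constructor; auto|constructor; auto].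
    + inversion H.
Qed.
Lemma whstep_hstep : forall s t, whstep s t -> hstep s t.
Proof.
  induction 1.
  - constructor.
  - constructor; auto. inversion H; reflexivity.
Qed.

Lemma hstep_nonlam_wh : forall t t', hstep t t' -> is_lam t = false -> whstep t t'.
Proof.
  induction 1; intros E; simpl in E; try discriminate.
  - constructor.
  - constructor; auto.
Qed.

Lemma hsteps_trans : forall a x y, hsteps a x y -> forall b z, hsteps b y z -> hsteps (a+b) x z.
Proof.
  induction 1; intros; simpl; auto. econstructor; eauto.
Qed.

Lemma whsteps_hsteps : forall s t, whsteps s t -> exists j, hsteps j s t.
Proof.
  induction 1.
  - exists 1. econstructor; [apply whstep_hstep; eauto|constructor].
  - exists 0. constructor.
  - destruct IHclos_refl_trans1 as [j1 ?]; destruct IHclos_refl_trans2 as [j2 ?].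
    exists (j1 + j2). eapply hsteps_trans; eauto.
Qed.

Lemma hsteps_lam : forall k b b', hsteps k b b' -> hsteps k (Lam b) (Lam b').
Proof. induction 1; econstructor; eauto. constructor; auto. Qed.

Lemma hsteps_lam_inv : forall k b X, hsteps k (Lam b) X -> exists X0, X = Lam X0 /\ hsteps k b X0.
Proof.
  intros k b X H. remember (Lam b) as t eqn:E. revert b E.
  induction H; intros b0 E; subst.
  - eexists; split; [reflexivity|constructor].
  - inversion H; subst. destruct (IHhsteps _ eq_refl) as [X0 [-> ?]].
    eexists; split; [reflexivity|]. econstructor; eauto.
Qed.

Lemma apps_snoc : forall h l x, apps h (l ++ [x]) = App (apps h l) x.
Proof. intros. unfold apps. rewrite fold_left_app. reflexivity. Qed.

Lemma apps_nonlam : forall y l, is_lam (apps (Var y) l) = false.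
Proof.
  intros y l. induction l using rev_ind; [reflexivity|]. rewrite apps_snoc. reflexivity.
Qed.

Lemma wpar_apps_inv : forall y args M, wpar M (apps (Var y) args) ->
  exists args1, M = apps (Var y) args1 /\ Forall2 par args1 args.
Proof.
  intros y args. induction args as [|x l IH] using rev_ind; intros M H.
  - inversion H; subst. exists []; split; auto.
  - rewrite apps_snoc in H. inversion H; subst.
    match goal with H : wpar _ (apps _ _) |- _ => destruct (IH _ H) as [a1 [-> ?]] end.
    exists (a1 ++ [c]); split.
    + rewrite apps_snoc; auto.
    + apply Forall2_app; auto.
Qed.

Lemma par_apps_inv : forall y args N, par (apps (Var y) args) N ->
  exists args', N = apps (Var y) args' /\ Forall2 par args args'.
Proof.
  intros y args. induction args as [|x l IH] using rev_ind; intros N H.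
  - inversion H; subst. exists []; split; auto.
  - rewrite apps_snoc in H. inversion H; subst.
    + match goal with H : par (apps _ _) _ |- _ => destruct (IH _ H) as [a1 [-> ?]] end.
      exists (a1 ++ [c']); split.
      * rewrite apps_snoc; auto.
      * apply Forall2_app; auto.
    + pose proof (apps_nonlam y l) as Z.
      match goal with H : Lam _ = apps _ _ |- _ => rewrite <- H in Z end. discriminate.
Qed.

Lemma lams_lam_shape : forall n y args X0, Lam X0 = lams n (apps (Var y) args) ->
  exists n', n = S n' /\ X0 = lams n' (apps (Var y) args).
Proof.
  intros [|n] y args X0 H; simpl in H.
  - pose proof (apps_nonlam y args). rewrite <- H in H0. discriminate.
  - inversion H; eauto.
Qed.

Lemma lams_nonlam : forall n y args, is_lam (lams n (apps (Var y) args)) = false -> n = 0.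
Proof. intros [|n] y args H; simpl in H; auto; discriminate. Qed.

Lemma F_par : forall k M N, par M N -> forall n y args,
  hsteps k M (lams n (apps (Var y) args)) ->
  exists k' args', k' <= k /\ hsteps k' N (lams n (apps (Var y) args')) /\ Forall2 par args args'.
Proof.
  induction k as [k IHk] using (well_founded_induction lt_wf).
  assert (NL : forall M N, is_lam M = false -> par M N -> forall n y args,
    hsteps k M (lams n (apps (Var y) args)) ->
    exists k' args', k' <= k /\ hsteps k' N (lams n (apps (Var y) args')) /\ Forall2 par args args').
  { intros M N HL HP n y args HS. destruct k as [|k0].
    - inversion HS; subst. rewrite (lams_nonlam _ _ _ HL) in *. simpl in *.
      destruct (par_apps_inv _ _ _ HP) as [a' [-> ?]].
      exists 0, a'; repeat split; auto. constructor.
    - inversion HS; subst.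
      pose proof (hstep_nonlam_wh _ _ H0 HL) as W.
      destruct (par_whstep_fwd _ _ W _ HP) as [N1 [[E|W'] HP1]].
      + subst N1. destruct (IHk k0 (Nat.lt_succ_diag_r _) _ _ HP1 _ _ _ H1) as [k' [a' [? [? ?]]]].
        exists k', a'; repeat split; auto.
      + destruct (IHk k0 (Nat.lt_succ_diag_r _) _ _ HP1 _ _ _ H1) as [k' [a' [? [? ?]]]].
        exists (S k'), a'; repeat split; auto; [lia|]. econstructor; [apply whstep_hstep; eauto|auto]. }
  intros M. induction M as [v|M0 IHM|a IHa c IHc]; intros N HP n y args HS.
  - eapply NL; [|exact HP|exact HS]; reflexivity.
  - destruct (par_lam_inv _ _ HP) as [N0 [-> HP0]].
    destruct (hsteps_lam_inv _ _ _ HS) as [X0 [E HS0]].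
    destruct (lams_lam_shape _ _ _ _ (eq_sym E)) as [n' [-> ->]].
    destruct (IHM _ HP0 _ _ _ HS0) as [k' [a' [? [? ?]]]].
    exists k', a'; repeat split; auto. apply hsteps_lam; auto.
  - eapply NL; [|exact HP|exact HS]; reflexivity.
Qed.

Lemma B_par : forall k N M, par M N -> forall n y args,
  hsteps k N (lams n (apps (Var y) args)) ->
  exists k' args', k <= k' /\ hsteps k' M (lams n (apps (Var y) args')) /\ Forall2 par args' args.
Proof.
  induction k as [k IHk] using (well_founded_induction lt_wf).
  assert (NL : forall N M, is_lam N = false -> par M N -> forall n y args,
    hsteps k N (lams n (apps (Var y) args)) ->
    exists k' args', k <= k' /\ hsteps k' M (lams n (apps (Var y) args')) /\ Forall2 par args' args).
  { intros N M HL HP n y args HS.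
    destruct (par_whsteps _ _ HP) as [M1 [HW HWP]].
    destruct (whsteps_hsteps _ _ HW) as [j Hj].
    destruct k as [|k0].
    - inversion HS; subst. rewrite (lams_nonlam _ _ _ HL) in *. simpl in *.
      destruct (wpar_apps_inv _ _ _ HWP) as [a1 [-> ?]].
      exists j, a1; repeat split; auto. lia.
    - inversion HS; subst.
      pose proof (hstep_nonlam_wh _ _ H0 HL) as W.
      destruct (wpar_whstep _ _ W _ HWP) as [M2 [W2 HP2]].
      destruct (IHk k0 (Nat.lt_succ_diag_r _) _ _ HP2 _ _ _ H1) as [k' [a' [? [? ?]]]].
      exists (j + S k'), a'; repeat split; auto; [lia|].
      eapply hsteps_trans; eauto. econstructor; [apply whstep_hstep; eauto|auto]. }
  intros N. induction N as [v|N0 IHN|a IHa c IHc]; intros M HP n y args HS.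
  - eapply NL; [|exact HP|exact HS]; reflexivity.
  - destruct (par_whsteps _ _ HP) as [M1 [HW HWP]].
    destruct (whsteps_hsteps _ _ HW) as [j Hj].
    inversion HWP; subst.
    destruct (hsteps_lam_inv _ _ _ HS) as [X0 [E HS0]].
    destruct (lams_lam_shape _ _ _ _ (eq_sym E)) as [n' [-> ->]].
    match goal with H : par _ N0 |- _ => destruct (IHN _ H _ _ _ HS0) as [k' [a' [? [? ?]]]] end.
    exists (j + k'), a'; repeat split; auto; [lia|].
    eapply hsteps_trans; eauto. apply hsteps_lam; auto.
  - eapply NL; [|exact HP|exact HS]; reflexivity.
Qed.
Lemma Forall2_map_impl : forall (R1 R2 : term -> term -> Prop) l1 l2,
  (forall x y, R1 x y -> R2 x y) -> Forall2 R1 l1 l2 -> Forall2 R2 l1 l2.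
Proof. intros R1 R2 l1 l2 H F; induction F; constructor; auto. Qed.

Lemma Forall2_red_refl : forall l, Forall2 red l l.
Proof. induction l; constructor; auto. apply rt_refl. Qed.

Lemma Forall2_red_trans : forall l1 l2, Forall2 red l1 l2 -> forall l3, Forall2 red l2 l3 ->
  Forall2 red l1 l3.
Proof.
  induction 1; intros l3 F; inversion F; subst; constructor; auto. eapply rt_trans; eauto.
Qed.

Lemma F_red : forall Q P, red Q P -> forall k n y args,
  hsteps k Q (lams n (apps (Var y) args)) ->
  exists k' args', k' <= k /\ hsteps k' P (lams n (apps (Var y) args')) /\ Forall2 red args args'.
Proof.
  induction 1 as [a b H|a|a b c H1 IH1 H2 IH2]; intros k n y args HS.
  - destruct (F_par _ _ _ (beta_par _ _ H) _ _ _ HS) as [k' [a' [? [? ?]]]].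
    exists k', a'; repeat split; auto. eapply Forall2_map_impl; [apply par_red|eauto].
  - exists k, args; repeat split; auto. apply Forall2_red_refl.
  - destruct (IH1 _ _ _ _ HS) as [k1 [a1 [? [G1 ?]]]].
    destruct (IH2 _ _ _ _ G1) as [k2 [a2 [? [? ?]]]].
    exists k2, a2; repeat split; auto; [lia|]. eapply Forall2_red_trans; eauto.
Qed.

Lemma B_red : forall Q P, red Q P -> forall k n y args,
  hsteps k P (lams n (apps (Var y) args)) ->
  exists k' args', k <= k' /\ hsteps k' Q (lams n (apps (Var y) args')) /\ Forall2 red args' args.
Proof.
  induction 1 as [a b H|a|a b c H1 IH1 H2 IH2]; intros k n y args HS.
  - destruct (B_par _ _ _ (beta_par _ _ H) _ _ _ HS) as [k' [a' [? [? ?]]]].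
    exists k', a'; repeat split; auto. eapply Forall2_map_impl; [apply par_red|eauto].
  - exists k, args; repeat split; auto. apply Forall2_red_refl.
  - destruct (IH2 _ _ _ _ HS) as [k1 [a1 [? [G1 ?]]]].
    destruct (IH1 _ _ _ _ G1) as [k2 [a2 [? [? ?]]]].
    exists k2, a2; repeat split; auto; [lia|]. eapply Forall2_red_trans; eauto.
Qed.

Lemma hstep_det : forall t t1, hstep t t1 -> forall t2, hstep t t2 -> t1 = t2.
Proof.
  induction 1; intros t2 H2; inversion H2; subst; auto.
  - discriminate.
  - f_equal; auto.
  - discriminate.
  - f_equal; auto.
Qed.

Lemma apps_nostep : forall y args t, ~ hstep (apps (Var y) args) t.
Proof.
  intros y args. induction args as [|x l IH] using rev_ind; intros t H.
  - inversion H.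
  - rewrite apps_snoc in H. inversion H; subst.
    + pose proof (apps_nonlam y l) as Z. rewrite <- H1 in Z. discriminate.
    + eapply IH; eauto.
Qed.

Lemma hnf_nostep : forall n y args t, ~ hstep (lams n (apps (Var y) args)) t.
Proof.
  induction n; intros y args t H; simpl in H.
  - eapply apps_nostep; eauto.
  - inversion H; subst. eapply IHn; eauto.
Qed.

Lemma hsteps_unique : forall k1 t H1, hsteps k1 t H1 -> (forall u, ~ hstep H1 u) ->
  forall k2 H2, hsteps k2 t H2 -> (forall u, ~ hstep H2 u) -> k1 = k2 /\ H1 = H2.
Proof.
  induction 1; intros N1 k2 H2 HS2 N2.
  - inversion HS2; subst; auto. exfalso; eapply N1; eauto.
  - inversion HS2; subst.
    + exfalso; eapply N2; eauto.
    + match goal with A : hstep t _, B : hsteps _ _ H2 |- _ =>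
        rewrite <- (hstep_det _ _ H _ A) in B;
        destruct (IHhsteps N1 _ _ B N2); subst; auto end.
Qed.

Lemma apps_inj : forall y1 a1 y2 a2, apps (Var y1) a1 = apps (Var y2) a2 -> y1 = y2 /\ a1 = a2.
Proof.
  intros y1 a1. induction a1 as [|x l IH] using rev_ind; intros y2 a2 E;
  destruct a2 as [|x2 l2 _] using rev_ind.
  - simpl in E. inversion E; auto.
  - rewrite apps_snoc in E. discriminate.
  - rewrite apps_snoc in E. discriminate.
  - rewrite !apps_snoc in E. inversion E. destruct (IH _ _ H0); subst; auto.
Qed.

Lemma lams_inj : forall n1 y1 a1 n2 y2 a2,
  lams n1 (apps (Var y1) a1) = lams n2 (apps (Var y2) a2) -> n1 = n2 /\ y1 = y2 /\ a1 = a2.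
Proof.
  induction n1; intros y1 a1 [|n2] y2 a2 E; simpl in E.
  - destruct (apps_inj _ _ _ _ E); auto.
  - pose proof (apps_nonlam y1 a1) as Z. rewrite E in Z. discriminate.
  - pose proof (apps_nonlam y2 a2) as Z. rewrite <- E in Z. discriminate.
  - inversion E. destruct (IHn1 _ _ _ _ _ H0) as [? [? ?]]; auto.
Qed.

Lemma hnf_data_some : forall t d, hnf_data t = Some d -> hnf_data_spec t d.
Proof.
  intros t d. unfold hnf_data. destruct excluded_middle_informative as [H|H]; intro E.
  - inversion E; subst. apply proj2_sig.
  - discriminate.
Qed.

Lemma hnf_data_none : forall t, hnf_data t = None -> forall d, ~ hnf_data_spec t d.
Proof.
  intros t. unfold hnf_data. destruct excluded_middle_informative as [H|H]; intro E.
  - discriminate.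
  - intros d Hd. apply H. eauto.
Qed.

Definition frob (c : cbt) : cbt :=
  match c with Bot => Bot | Node a b c d f => Node a b c d f end.
Lemma frob_eq : forall c, c = frob c.
Proof. destruct c; reflexivity. Qed.

Lemma cBT_unfold : forall t, cBT t =
  match hnf_data t with
  | None => Bot
  | Some (k, n, y, args) =>
      Node k n y (length args) (fun i => cBT (nth i args (Var 0)))
  end.
Proof.
  intros t. rewrite (frob_eq (cBT t)). simpl.
  destruct (hnf_data t) as [[[[k n] y] args]|]; reflexivity.
Qed.

Lemma cbt_coind : forall R : cbt -> cbt -> Prop,
  (forall c1 c2, R c1 c2 -> (c1 = Bot /\ c2 = Bot) \/
     exists k1 k2 n y m f g, c1 = Node k1 n y m f /\ c2 = Node k2 n y m g /\ k1 <= k2 /\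
       forall i, i < m -> R (f i) (g i)) ->
  forall c1 c2, R c1 c2 -> cbt_le c1 c2.
Proof.
  intros R HR. cofix CIH. intros c1 c2 H.
  destruct (HR _ _ H) as [[-> ->] | (k1 & k2 & n & y & m & f & g & -> & -> & Hk & Hf)].
  - constructor.
  - constructor; auto.
Qed.

Lemma Forall2_nth_red : forall l1 l2, Forall2 red l1 l2 -> forall i, i < length l1 ->
  red (nth i l1 (Var 0)) (nth i l2 (Var 0)).
Proof.
  induction 1; intros i Hi; simpl in *; [lia|]. destruct i; auto. apply IHForall2. lia.
Qed.

Lemma red_le_c : forall Q P, red Q P -> le_c P Q.
Proof.
  intros Q P H. unfold le_c.
  apply (cbt_coind (fun c1 c2 => exists P Q, red Q P /\ c1 = cBT P /\ c2 = cBT Q)); [|eauto].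
  clear. intros c1 c2 (P & Q & HR & -> & ->).
  rewrite (cBT_unfold P), (cBT_unfold Q).
  destruct (hnf_data P) as [[[[kP nP] yP] aP]|] eqn:EP;
  destruct (hnf_data Q) as [[[[kQ nQ] yQ] aQ]|] eqn:EQ.
  - right. pose proof (hnf_data_some _ _ EP) as SP. pose proof (hnf_data_some _ _ EQ) as SQ.
    simpl in SP, SQ.
    destruct (F_red _ _ HR _ _ _ _ SQ) as [k' [a' [Hk [HS HF]]]].
    destruct (hsteps_unique _ _ _ SP (hnf_nostep _ _ _) _ _ HS (hnf_nostep _ _ _)) as [<- E].
    destruct (lams_inj _ _ _ _ _ _ E) as [<- [<- <-]].
    pose proof (Forall2_length HF) as HL.
    exists kP, kQ, nP, yP, (length aP), (fun i => cBT (nth i aP (Var 0))),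
      (fun i => cBT (nth i aQ (Var 0))).
    repeat split; auto. { rewrite HL. reflexivity. }
    intros i Hi. exists (nth i aP (Var 0)), (nth i aQ (Var 0)); repeat split.
    apply Forall2_nth_red; auto. lia.
  - exfalso. pose proof (hnf_data_some _ _ EP) as SP. simpl in SP.
    destruct (B_red _ _ HR _ _ _ _ SP) as [k' [a' [_ [HS _]]]].
    exact (hnf_data_none _ EQ (k', nP, yP, a') HS).
  - exfalso. pose proof (hnf_data_some _ _ EQ) as SQ. simpl in SQ.
    destruct (F_red _ _ HR _ _ _ _ SQ) as [k' [a' [_ [HS _]]]].
    exact (hnf_data_none _ EP (k', nQ, yQ, a') HS).
  - left; auto.
Qed.

Theorem theorem6p6 : forall M N : term,
  (exists N', red N N' /\ (forall M', red M M' -> ~ le_c M' N')) ->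
  ~ conv M N.
Proof.
  intros M N [N' [HN Hno]] Hc.
  assert (Hc' : conv M N') by (eapply rst_trans; [exact Hc|apply red_conv; auto]).
  destruct (conv_join _ _ Hc') as [Z [HMZ HNZ]].
  apply (Hno Z HMZ). apply red_le_c; auto.
Qed.
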